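(* (Stability 2.) Let $1\le m\le n$, $x^{(m)}=(x_1,\dots,x_{m-1})$, $y^{(n)}=(y_1,\dots,y_{n-1})$. Then (for either type) \[{_{r+1}\Phi_r}\left[\begin{matrix}a_1,\dots,a_{r+1}\\ b_1,\dots,b_r\end{matrix};q,t;(x^{(m)},0),(y^{(n)},0)\right]={_{r+2}\Phi_{r+1}}\left[\begin{matrix}t^{n-1},a_1,\dots,a_{r+1}\\ t^n,b_1,\dots,b_r\end{matrix};q,t;x^{(m)},ty^{(n)}\right],\] where the left series has parameters $(m,n)$ and the right series has parameters $(m-1,n-1)$.
   Context: Notation. $(b;q)_N=(1-b)\cdots(1-bq^{N-1})$, $(b;q)_{-N}=1/(bq^{-N};q)_N$, $(b;q)_\infty=\prod_{k\ge0}(1-bq^k)$. For a partition $\lambda$: $l(\lambda)$, $|\lambda|$, $n(\lambda)=\sum_i(i-1)\lambda_i$, $c'_\lambda(q,t)=\prod_{s\in\lambda}(1-q^{a(s)+1}t^{l(s)})$ ($a(s)=\lambda_i-j$, $l(s)=\lambda'_j-i$), $(b;q,t)_\lambda=\prod_{i\ge1}(bt^{1-i};q)_{\lambda_i}$. $P_\lambda(x;q,t)$ Macdonald polynomial. For $0\le m\le n$: $F(u;x,y;t)=\sum_{I\subseteq\{1,\dots,m\}}(-u)^{|I|}t^{\binom{|I|}{2}}\prod_{i\in I,\,j\notin I}\frac{tx_i-x_j}{x_i-x_j}\prod_{i\in I}\prod_{j=1}^n\frac{1-x_iy_j}{1-tx_iy_j}$; $V_{\lambda\mu}(u,z;q,t)$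 is $F(u;x^{-1},y;t)$ at $x_i=zq^{\lambda_i}t^{m-i}$, $y_j=q^{\mu_j}t^{n-j}$; Type I: $V_{\lambda\mu}(q,t)=V_{\lambda\mu}(1,1;q,t)$; Type II: $V_{\lambda\mu}(q,t)=q^{-|\lambda|}V_{\lambda\mu}(t^{n-m+1},1;q,t)$; $\Omega_{\lambda\mu}(q,t)=V_{\lambda\mu}(q,t)(qt^{m-1};q,t)_\lambda\prod_{i=1}^m\prod_{j=1}^n\frac{(qt^{j-i+m-n-1};q)_{\lambda_i-\mu_j}}{(qt^{j-i+m-n};q)_{\lambda_i-\mu_j}}$. The $\mathfrak{sl}_3$ series with parameters $(m,n)$: ${_{r+1}\Phi_r}[a;b;q,t;x,y]=\prod_{i=1}^m\frac{(x_i;q)_\infty}{(x_it^{m-n-1};q)_\infty}\sum_{\lambda,\mu}t^{n(\lambda)+n(\mu)}\frac{P_\lambda(x;q,t)P_\mu(y;q,t)}{c'_\lambda(q,t)c'_\mu(q,t)}\frac{(a_1,\dots,a_{r+1};q,t)_\mu}{(b_1,\dots,b_r;q,t)_\mu}\Omega_{\lambda\mu}(q,t)$, over $l(\lambda)\le m$, $l(\mu)\le n$, $\lambda_i\ge\mu_{i-m+n}$. Convergence assumed. *)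

(* Defs.v *)
From HB Require Import structures.
From mathcomp Require Import all_boot all_order all_algebra.
From mathcomp Require Import boolp classical_sets topology normedtype sequences.
Set Implicit Arguments. Unset Strict Implicit. Unset Printing Implicit Defensive.
Import Order.TTheory GRing.Theory Num.Theory numFieldNormedType.Exports.
Local Open Scope classical_set_scope.
Local Open Scope ring_scope.

Definition qpoch {K : numFieldType} (b q : K) (N : nat) : K :=
  \prod_(k < N) (1 - b * q ^+ k).
Definition qpochZ {K : numFieldType} (b q : K) (N : int) : K :=
  match N with
  | Posz k => qpoch b q k
  | Negz k => (qpoch (b * q ^- k.+1) q k.+1)^-1
  end.
Definition qpoch_inf {K : numFieldType} (b q : K) : K :=
  lim (qpoch b q @ \oo).

(* ---------- partitions ----------
   A partition is a seq nat (nonincreasing; trailing zeros allowed and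
   harmless).  Rows/columns are 0-indexed below: part s i = lambda_{i+1}. *)
Definition part (s : seq nat) (i : nat) : nat := nth 0%N s i.
Definition pconj (s : seq nat) (j : nat) : nat := count (fun x => (j < x)%N) s.
(* arm and leg of the box s=(i+1,j+1) *)
Definition arm (s : seq nat) (i j : nat) : nat := (part s i - j.+1)%N.
Definition leg (s : seq nat) (i j : nat) : nat := (pconj s j - i.+1)%N.
Definition nfun (s : seq nat) : nat := (\sum_(i < size s) i * part s i)%N.
Definition cprime {K : numFieldType} (q t : K) (s : seq nat) : K :=
  \prod_(i < size s) \prod_(j < part s i)
     (1 - q ^+ (arm s i j).+1 * t ^+ leg s i j).
Definition qtpoch {K : numFieldType} (b q t : K) (s : seq nat) : K :=
  \prod_(i < size s) qpoch (b * t ^- i) q (part s i).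

Definition fseq (k N : nat) (f : {ffun 'I_k -> 'I_N}) : seq nat :=
  [seq nat_of_ord (f i) | i <- enum 'I_k].

(* ---------- Macdonald polynomials P_lambda(x;q,t) ----------
   Defined by Macdonald's explicit formula (Symmetric Functions and Hall
   Polynomials, VI (7.13')): P_lambda = sum_T psi_T(q,t) x^T over
   semistandard tableaux T of shape lambda, with
   psi_T = prod_i psi_{lambda^(i)/lambda^(i-1)},
   psi_{lambda/mu} = prod_{s in R_{lambda/mu} - C_{lambda/mu}} b_mu(s)/b_lambda(s),
   b_lambda(s) = (1 - q^{a(s)} t^{l(s)+1}) / (1 - q^{a(s)+1} t^{l(s)}). *)
Definition bfun {K : numFieldType} (q t : K) (s : seq nat) (i j : nat) : K :=
  (1 - q ^+ arm s i j * t ^+ (leg s i j).+1) /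
  (1 - q ^+ (arm s i j).+1 * t ^+ leg s i j).
(* boxes (i,j) of lambda in a row meeting lambda/mu but in a column not
   meeting lambda/mu *)
Definition psi {K : numFieldType} (q t : K) (lam mu : seq nat) : K :=
  \prod_(i < size lam)
    \prod_(j < part lam i | (part mu i < part lam i)%N && (pconj lam j == pconj mu j))
      (bfun q t mu i j / bfun q t lam i j).
Definition hstrip (lam mu : seq nat) : bool :=
  all (fun i => (part lam i.+1 <= part mu i <= part lam i)%N) (iota 0 (size lam)).
(* variables given in reverse order: the head is the last variable x_m *)
Fixpoint macP_rev {K : numFieldType} (q t : K) (xr : seq K) (lam : seq nat) : K :=
  match xr with
  | [::] => if all (fun k => k == 0%N) lam then 1 else 0
  | x :: xr' =>
      \sum_(f : {ffun 'I_(size lam) -> 'I_(head 0%N lam).+1} | hstrip lam (fseq f))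
        psi q t lam (fseq f) * x ^+ (sumn lam - sumn (fseq f)) *
        macP_rev q t xr' (fseq f)
  end.
Definition macP {K : numFieldType} (q t : K) (xs : seq K) (lam : seq nat) : K :=
  macP_rev q t (rev xs) lam.

Definition Ffun {K : numFieldType} (u t : K) (m n : nat) (x y : seq K) : K :=
  \sum_(I : {set 'I_m})
    (- u) ^+ #|I| * t ^+ 'C(#|I|, 2) *
    (\prod_(i in I) \prod_(j in ~: I)
        ((t * nth 0 x i - nth 0 x j) / (nth 0 x i - nth 0 x j))) *
    (\prod_(i in I) \prod_(j < n)
        ((1 - nth 0 x i * nth 0 y j) / (1 - t * nth 0 x i * nth 0 y j))).
Definition Vz {K : numFieldType} (u z q t : K) (m n : nat) (lam mu : seq nat) : K :=
  Ffun u t m n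
    [seq (z * q ^+ part lam i * t ^+ (m - i.+1))^-1 | i <- iota 0 m]
    [seq q ^+ part mu j * t ^+ (n - j.+1) | j <- iota 0 n].
(* value at z = 1 of the rational function z |-> V_{lambda mu}(u,z;q,t) *)
Definition V1 {K : numFieldType} (u q t : K) (m n : nat) (lam mu : seq nat) : K :=
  lim ((fun z => Vz u z q t m n lam mu) @ (1 : K)^').

Inductive mtype := TypeI | TypeII.

Definition Vqt {K : numFieldType} (typ : mtype) (q t : K) (m n : nat)
  (lam mu : seq nat) : K :=
  match typ with
  | TypeI => V1 1 q t m n lam mu
  | TypeII => q ^- sumn lam * V1 (t ^+ (n - m).+1) q t m n lam mu
  end.

Definition Omega {K : numFieldType} (typ : mtype) (q t : K) (m n : nat)
  (lam mu : seq nat) : K :=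
  Vqt typ q t m n lam mu * qtpoch (q * t ^ (m%:Z - 1)) q t lam *
  \prod_(i < m) \prod_(j < n)
    (qpochZ (q * t ^ (j%:Z - i%:Z + m%:Z - n%:Z - 1)) q
            ((part lam i)%:Z - (part mu j)%:Z) /
     qpochZ (q * t ^ (j%:Z - i%:Z + m%:Z - n%:Z)) q
            ((part lam i)%:Z - (part mu j)%:Z)).

Definition term {K : numFieldType} (typ : mtype) (q t : K) (m n : nat)
  (a b x y : seq K) (lam mu : seq nat) : K :=
  t ^+ (nfun lam + nfun mu) * macP q t x lam * macP q t y mu /
  (cprime q t lam * cprime q t mu) *
  (\prod_(c <- a) qtpoch c q t mu) / (\prod_(c <- b) qtpoch c q t mu) *
  Omega typ q t m n lam mu.

(* lambda_i >= mu_{i-m+n} for all i (1-indexed; zero beyond the length) *)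
Definition interlace (m n : nat) (lam mu : seq nat) : bool :=
  all (fun i => (part mu (i + (n - m)) <= part lam i)%N) (iota 0 m).

(* Partitions of length <= k and
   parts <= N are encoded (uniquely) as nonincreasing f : 'I_k -> 'I_N.+1. *)
Definition Psum {K : numFieldType} (typ : mtype) (q t : K) (m n : nat)
  (a b x y : seq K) (N : nat) : K :=
  \sum_(f : {ffun 'I_m -> 'I_N.+1} | sorted geq (fseq f))
   \sum_(g : {ffun 'I_n -> 'I_N.+1} |
          [&& sorted geq (fseq g), interlace m n (fseq f) (fseq g)
            & (sumn (fseq f) + sumn (fseq g) <= N)%N])
     term typ q t m n a b x y (fseq f) (fseq g).

Definition prefactor {K : numFieldType} (q t : K) (m n : nat) (x : seq K) : K :=
  \prod_(i < m)
    (qpoch_inf (nth 0 x i) q / qpoch_inf (nth 0 x i * t ^ (m%:Z - n%:Z - 1)) q).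

Definition Phi {K : numFieldType} (typ : mtype) (q t : K) (m n : nat)
  (a b x y : seq K) : K :=
  prefactor q t m n x * lim (Psum typ q t m n a b x y @ \oo).

(* Main.v *)
Require Import Defs.
From HB Require Import structures.
From mathcomp Require Import all_boot all_order all_algebra.
From mathcomp Require Import boolp classical_sets topology normedtype sequences.
Import Order.TTheory GRing.Theory Num.Theory numFieldNormedType.Exports.
Local Open Scope classical_set_scope.
Local Open Scope ring_scope.
Set Implicit Arguments. Unset Strict Implicit. Unset Printing Implicit Defensive.

Section Ana.
Variable K : numFieldType.

Lemma cvg_sumK {T : Type} (F : set_system T) {FF : Filter F} (I : Type) (r : seq I)
  (P : pred I) (f : I -> T -> K) (a : I -> K) :
  (forall i, P i -> f i x @[x --> F] --> a i) ->
  (\sum_(i <- r | P i) f i x) @[x --> F] --> \sum_(i <- r | P i) a i.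
Proof.
move=> H; elim: r => [|i r IH].
  rewrite big_nil; under eq_cvg do rewrite big_nil; exact: cvg_cst.
rewrite big_cons; under eq_cvg do rewrite big_cons.
case: ifP => Pi //; exact: cvgD (H _ Pi) IH.
Qed.

Lemma cvg_prodK {T : Type} (F : set_system T) {FF : Filter F} (I : Type) (r : seq I)
  (P : pred I) (f : I -> T -> K) (a : I -> K) :
  (forall i, P i -> f i x @[x --> F] --> a i) ->
  (\prod_(i <- r | P i) f i x) @[x --> F] --> \prod_(i <- r | P i) a i.
Proof.
move=> H; elim: r => [|i r IH].
  rewrite big_nil; under eq_cvg do rewrite big_nil; exact: cvg_cst.
rewrite big_cons; under eq_cvg do rewrite big_cons.
case: ifP => Pi //; exact: cvgM (H _ Pi) IH.
Qed.

Lemma lim_sumK {T : Type} (F : set_system T) {FF : ProperFilter F} (I : Type) (r : seq I)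
  (P : pred I) (f : I -> T -> K) :
  (forall i, P i -> cvg (f i x @[x --> F])) ->
  lim ((\sum_(i <- r | P i) f i x) @[x --> F]) = \sum_(i <- r | P i) lim (f i x @[x --> F]).
Proof. by move=> H; apply: norm_cvg_lim; apply: cvg_sumK. Qed.

Lemma near1_neq0 : \forall z \near (1:K)^', z != 0.
Proof.
apply: (@cvgr_neq0 _ _ _ _ _ (fun z : K => z) 1); last exact: oner_neq0.
exact: cvg_within.
Qed.

Lemma near1_neq1 : \forall z \near (1:K)^', z != 1.
Proof. exact: nbhs_dnbhs_neq. Qed.

Lemma cvg_id1 : (fun z : K => z) @ (1:K)^' --> (1:K).
Proof. exact: cvg_within. Qed.

End Ana.
From mathcomp Require Import ring lra.

Section Gen.
Variables (K : numFieldType) (q t : K).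
Hypothesis q0 : q != 0.
Hypothesis t0 : t != 0.
Hypothesis gen : forall i j : int, (i != 0) || (j != 0) -> q ^ i * t ^ j != 1.

Lemma qt_neq0 a b : q ^+ a * t ^+ b != 0.
Proof. by rewrite mulf_neq0 // expf_neq0. Qed.

Lemma gen_eq a b c d : q ^+ a * t ^+ b = q ^+ c * t ^+ d -> a = c /\ b = d.
Proof.
move=> E.
have H : q ^ (a%:Z - c%:Z) * t ^ (b%:Z - d%:Z) = 1.
  rewrite !expfzDr // -!invr_expz.
  rewrite mulrACA -invfM -E mulfV //; exact: qt_neq0.
move: H; case: (eqVneq a c) => [->|ac]; case: (eqVneq b d) => [->|bd] //; move=> H; exfalso.
- have := @gen 0 (b%:Z - d%:Z); rewrite subr_eq0 eqz_nat bd orbT => /(_ isT).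
  by rewrite -H subrr eqxx.
- have := @gen (a%:Z - c%:Z) 0; rewrite subr_eq0 eqz_nat ac /= => /(_ isT).
  by rewrite -H subrr eqxx.
- have := @gen (a%:Z - c%:Z) (b%:Z - d%:Z); rewrite subr_eq0 eqz_nat ac /= => /(_ isT).
  by rewrite H eqxx.
Qed.

Lemma gen_eqb a b c d : (q ^+ a * t ^+ b == q ^+ c * t ^+ d) = (a == c) && (b == d).
Proof. by apply/eqP/andP => [/gen_eq [-> ->] | [/eqP-> /eqP->]]. Qed.

End Gen.
From mathcomp Require Import zify.

Lemma sum_pick N k (P : pred nat) :
  (\sum_(j < N) ((j == k :> nat) && P j : nat) = ((k < N) && P k : nat))%N.
Proof.
case: (ltnP k N) => hk /=.
  rewrite (bigD1 (Ordinal hk)) //= eqxx /= big1 ?addn0 // => j hj.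
  suff -> : (j == k :> nat) = false by [].
  apply/negbTE; apply: contra hj => /eqP e; apply/eqP/val_inj => /=; exact: e.
rewrite big1 // => j _.
suff -> : (j == k :> nat) = false by [].
apply/negbTE; have := ltn_ord j; apply: contraL => /eqP ->; rewrite -leqNgt.
exact: hk.
Qed.

Lemma count_chain (z : nat -> bool) M' :
  (\sum_(0 <= i < M') (z i && z i.+1 : nat) + has z (iota 0 M'.+1)
     <= \sum_(0 <= i < M'.+1) (z i : nat))%N.
Proof.
elim: M' => [|M' IH].
  by rewrite big_geq // big_nat1 /=; case: (z 0).
rewrite big_nat_recr // [X in (_ <= X)%N]big_nat_recr //.
rewrite (_ : iota 0 M'.+2 = iota 0 M'.+1 ++ [:: M'.+1]); last by rewrite -addn1 iotaD.
rewrite has_cat has_seq1.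
have hh : z M' -> has z (iota 0 M'.+1).
  by move=> zM; apply/hasP; exists M'; rewrite // mem_iota add0n ltnSn.
move: IH hh; move: (has z (iota 0 M'.+1)) => h.
move: (\sum_(0 <= i < M') (z i && z i.+1 : nat))%N => s1.
move: (\sum_(0 <= i < M'.+1) (z i : nat))%N => s2.
case: (z M'); case: (z M'.+1); case: h => /=; lia.
Qed.

Lemma fact_decomp (K : numFieldType) (w a b : K) :
  (1 - w * a) / (1 - w * b) =
  (1 - w) ^+ (a == 1) / (1 - w) ^+ (b == 1) *
  ((if a == 1 then 1 else 1 - w * a) / (if b == 1 then 1 else 1 - w * b)).
Proof.
case: (eqVneq a 1) => [->|ha]; case: (eqVneq b 1) => [->|hb] /=;
  rewrite ?eqxx ?divr1 ?mulr1 ?expr1 ?expr0 ?divr1 ?mul1r ?mulr1 //.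
by rewrite mulrC.
Qed.
Lemma inv_mul_eq1 (K : numFieldType) (A B : K) : A != 0 -> (A^-1 * B == 1) = (B == A).
Proof.
move=> A0; apply/eqP/eqP => [H|->]; last exact: mulVf.
by rewrite -[B]mul1r -(mulfV A0) -mulrA H mulr1.
Qed.

Section World.
Variables (K : numFieldType) (q t u : K) (M N : nat) (lam mu : nat -> nat).

Definition xX (z : K) (i : nat) : K := (z * q ^+ lam i * t ^+ (M - i.+1))^-1.
Definition cX (i : nat) : K := (q ^+ lam i * t ^+ (M - i.+1))^-1.
Definition yY (j : nat) : K := q ^+ mu j * t ^+ (N - j.+1).
Definition crossF (z : K) (I : {set 'I_M}) : K :=
  \prod_(i in I) \prod_(j in ~: I) ((t * xX z i - xX z j) / (xX z i - xX z j)).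
Definition PF (z : K) (I : {set 'I_M}) : K :=
  \prod_(i in I) \prod_(j < N) ((1 - xX z i * yY j) / (1 - t * xX z i * yY j)).
Definition Tz (I : {set 'I_M}) (z : K) : K :=
  (- u) ^+ #|I| * t ^+ 'C(#|I|, 2) * crossF z I * PF z I.
Definition KI (I : {set 'I_M}) : K :=
  (- u) ^+ #|I| * t ^+ 'C(#|I|, 2) *
  \prod_(i in I) \prod_(j in ~: I) ((t * cX i - cX j) / (cX i - cX j)).
Definition alpha (i j : nat) : K := cX i * yY j.
Definition beta (i j : nat) : K := t * cX i * yY j.
Definition rho (a b w : K) : K :=
  (if a == 1 then 1 else 1 - w * a) / (if b == 1 then 1 else 1 - w * b).
Definition EZ (I : {set 'I_M}) : nat := (\sum_(i in I) \sum_(j < N) (alpha i j == 1%R : nat))%N.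
Definition EB (I : {set 'I_M}) : nat := (\sum_(i in I) \sum_(j < N) (beta i j == 1%R : nat))%N.
Definition RR (I : {set 'I_M}) (w : K) : K :=
  \prod_(i in I) \prod_(j < N) rho (alpha i j) (beta i j) w.

Lemma xXE z i : xX z i = z^-1 * cX i.
Proof. by rewrite /xX /cX -mulrA invfM. Qed.

Lemma ratio_scale (w a b : K) : w != 0 -> (t*(w*a) - w*b)/(w*a - w*b) = (t*a - b)/(a-b).
Proof.
move=> w0; have ->: t*(w*a) - w*b = w * (t*a - b) by ring.
by rewrite -mulrBr invfM mulrACA mulfV // mul1r.
Qed.

Lemma TzE I z : z != 0 ->
  Tz I z = KI I * ((1 - z^-1) ^+ EZ I / (1 - z^-1) ^+ EB I * RR I z^-1).
Proof.
move=> z0.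
have hc : crossF z I = \prod_(i in I) \prod_(j in ~: I) ((t * cX i - cX j) / (cX i - cX j)).
  apply: eq_bigr => i _; apply: eq_bigr => j _.
  by rewrite !xXE ratio_scale // invr_eq0.
have E : forall (i : 'I_M) (j : 'I_N),
  (1 - xX z i * yY j) / (1 - t * xX z i * yY j) =
  (1 - z^-1) ^+ (alpha i j == 1%R) / (1 - z^-1) ^+ (beta i j == 1%R) *
   rho (alpha i j) (beta i j) z^-1.
  move=> i j; rewrite -fact_decomp /alpha /beta xXE; congr (_ / _); congr (_ - _); ring.
have hp : PF z I = (1 - z^-1) ^+ EZ I / (1 - z^-1) ^+ EB I * RR I z^-1.
  rewrite /PF /RR /EZ /EB.
  under eq_bigr => i _ do under eq_bigr => j _ do rewrite E.
  under eq_bigr => i _ do rewrite big_split prodf_div /= !prodrXr.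
  by rewrite big_split prodf_div /= !prodrXr.
rewrite /Tz hc hp /KI; ring.
Qed.


Hypothesis q0 : q != 0.
Hypothesis t0 : t != 0.
Hypothesis gen : forall i j : int, (i != 0) || (j != 0) -> q ^ i * t ^ j != 1.
Hypothesis MN : (M <= N)%N.
Hypothesis lam_ni : forall i, (lam i.+1 <= lam i)%N.
Hypothesis mu_ni : forall i, (mu i.+1 <= mu i)%N.
Hypothesis inter : forall i, (i < M)%N -> (mu (i + (N - M))%N <= lam i)%N.

Lemma alpha1 (i : 'I_M) (j : 'I_N) :
  (alpha i j == 1) = (j == (i + (N - M))%N :> nat) && (mu j == lam i).
Proof.
rewrite /alpha /cX inv_mul_eq1 ?qt_neq0 // /yY gen_eqb // andbC; congr (_ && _).
have := ltn_ord i; have := ltn_ord j; move=> hj hi; apply/eqP/eqP; lia.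
Qed.

Lemma beta1 (i : 'I_M) (j : 'I_N) :
  (beta i j == 1) = (j == (i.+1 + (N - M))%N :> nat) && (mu j == lam i).
Proof.
have hj := ltn_ord j; have hi := ltn_ord i.
have -> : beta i j = cX i * (q ^+ mu j * t ^+ (N - j)).
  rewrite /beta /yY (_ : (N - j)%N = (N - j.+1).+1); last lia.
  rewrite exprS; ring.
rewrite /cX inv_mul_eq1 ?qt_neq0 // gen_eqb // andbC; congr (_ && _).
apply/eqP/eqP; lia.
Qed.

Lemma sumZ (i : 'I_M) :
  (\sum_(j < N) (alpha i j == 1%R : nat) = (mu (i + (N - M))%N == lam i : nat))%N.
Proof.
have := sum_pick N (i + (N - M))%N (fun k => mu k == lam i) => /= E.
rewrite (eq_bigr _ (fun j _ => congr1 nat_of_bool (alpha1 i j))) E.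
rewrite (_ : (i + (N - M) < N)%N = true) //.
have := ltn_ord i; lia.
Qed.

Lemma sumB (i : 'I_M) :
  (\sum_(j < N) (beta i j == 1%R : nat) =
    ((i.+1 + (N - M) < N)%N && (mu (i.+1 + (N - M))%N == lam i) : nat))%N.
Proof.
have := sum_pick N (i.+1 + (N - M))%N (fun k => mu k == lam i) => /= E.
by rewrite (eq_bigr _ (fun j _ => congr1 nat_of_bool (beta1 i j))) E.
Qed.

Definition memI (I : {set 'I_M}) (k : nat) : bool := [exists i in I, (i : nat) == k].

Lemma memI_ord I (i : 'I_M) : memI I i = (i \in I).
Proof.
apply/existsP/idP => [[j /andP[jI /eqP/val_inj <-]] // | iI].
by exists i; rewrite iI eqxx.
Qed.

Lemma sum_in_nat (I : {set 'I_M}) (g : nat -> bool) :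
  (\sum_(i in I) (g i : nat) = \sum_(0 <= i < M) (memI I i && g i : nat))%N.
Proof.
rewrite big_mkord big_mkcond /=; apply: eq_bigr => i _; rewrite memI_ord.
by case: (i \in I).
Qed.

Lemma EZ_nat I : EZ I = (\sum_(0 <= i < M) (memI I i && (mu (i + (N - M))%N == lam i) : nat))%N.
Proof.
rewrite /EZ (eq_bigr (fun i : 'I_M => (fun k => mu (k + (N - M))%N == lam k) (i : nat) : nat)).
  exact: sum_in_nat.
by move=> i _; rewrite sumZ.
Qed.

Lemma EB_nat I : EB I = (\sum_(0 <= i < M)
   (memI I i && ((i.+1 + (N - M) < N)%N && (mu (i.+1 + (N - M))%N == lam i))  : nat))%N.
Proof.
rewrite /EB (eq_bigr (fun i : 'I_M => (fun k => (k.+1 + (N - M) < N)%N &&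
     (mu (k.+1 + (N - M))%N == lam k)) (i : nat) : nat)).
  exact: sum_in_nat.
by move=> i _; rewrite sumB.
Qed.

Lemma cX_neq0 i : cX i != 0.
Proof. by rewrite /cX invr_eq0 qt_neq0. Qed.

Lemma cX_succ i : (i.+1 < M)%N -> lam i.+1 = lam i -> t * cX i = cX i.+1.
Proof.
rewrite /cX => h e; rewrite e (_ : (M - i.+1)%N = (M - i.+2).+1); last lia.
rewrite exprS; field; rewrite ?expf_neq0 //.
Qed.

Lemma KI0 (I : {set 'I_M}) (i j : 'I_M) : i \in I -> j \notin I -> t * cX i = cX j -> KI I = 0.
Proof.
rewrite /KI => iI jI e; apply/eqP; rewrite mulf_eq0; apply/orP; right.
rewrite (bigD1 i) //= mulf_eq0 (bigD1 j) ?inE //= e subrr !mul0r eqxx //.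
Qed.

Lemma chain_step (I : {set 'I_M}) i : KI I != 0 -> memI I i -> (i.+1 + (N - M) < N)%N%N ->
  mu (i.+1 + (N - M))%N = lam i ->
  [&& memI I i, mu (i + (N - M))%N == lam i, memI I i.+1,
      mu (i.+1 + (N - M))%N == lam i.+1 & (i.+1 < M)%N].
Proof.
move=> KIn mI hN he.
have hM : (i.+1 < M)%N by lia.
have e1 : lam i.+1 = lam i.
  have := inter hM; have := lam_ni i; rewrite he; lia.
have e0 : mu (i + (N - M))%N = lam i.
  have := inter (ltnW hM); have := mu_ni (i + (N - M))%N; rewrite -addSn he; lia.
rewrite mI e0 -e1 he e1 eqxx hM /= andbT.
apply: contraNT KIn => nmI; apply/eqP.
case/existsP: mI => io /andP[ioI /eqP eio].
apply: (@KI0 I io (Ordinal hM)) => //; first by rewrite -memI_ord.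
by rewrite eio cX_succ.
Qed.

Lemma chain_count (Z B : nat -> bool) (M0 : nat) :
  (forall i, (i < M0)%N -> B i -> [&& Z i, Z i.+1 & (i.+1 < M0)%N]) ->
  (\sum_(0 <= i < M0) (B i : nat) + has Z (iota 0 M0) <= \sum_(0 <= i < M0) (Z i : nat))%N.
Proof.
case: M0 => [|M'] H; first by rewrite !big_geq.
rewrite big_nat_recr //.
have -> : B M' = false.
  by apply/negP => /(H _ (ltnSn _)) /and3P[_ _]; rewrite ltnn.
rewrite /= addn0; apply: leq_trans (count_chain Z M'); rewrite leq_add2r.
rewrite big_nat_cond [X in (_ <= X)%N]big_nat_cond; apply: leq_sum => i /andP[/andP[_ hi] _].
case hB : (B i) => //=.
by case/and3P: (H i (ltn_trans hi (ltnSn _)) hB) => -> -> _.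
Qed.

Lemma EB_le I : KI I != 0 ->
  (EB I + has (fun i => memI I i && (mu (i + (N - M))%N == lam i)) (iota 0 M) <= EZ I)%N.
Proof.
move=> KIn; rewrite EZ_nat EB_nat; apply: chain_count => i _ /andP[mI /andP[hN /eqP he]].
by case/and5P: (chain_step KIn mI hN he) => -> -> -> -> ->.
Qed.

Lemma cvg_inv1 : (fun z : K => z^-1) @ (1:K)^' --> (1:K).
Proof. rewrite -[X in _ --> X]invr1; exact: cvgV (oner_neq0 K) (@cvg_id1 K). Qed.

Lemma cvg_lin (a : K) : (fun z : K => 1 - z^-1 * a) @ (1:K)^' --> 1 - 1 * a.
Proof. apply: cvgB; first exact: cvg_cst. exact: cvgMr_tmp cvg_inv1. Qed.

Lemma cvg_rho a b : (fun z => rho a b z^-1) @ (1:K)^' --> rho a b 1.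
Proof.
rewrite /rho; apply: cvgM.
  case: (a == 1); [exact: cvg_cst | exact: cvg_lin].
apply: (@cvgV _ _ _ _ (fun z : K => if b == 1 then 1 else 1 - z^-1 * b)
          (if b == 1 then 1 else 1 - 1 * b)).
  case: (eqVneq b 1) => [_|hb]; first exact: oner_neq0.
  by rewrite mul1r subr_eq0 eq_sym.
case: (b == 1); [exact: cvg_cst | exact: cvg_lin].
Qed.

Lemma cvg_RR I : (fun z => RR I z^-1) @ (1:K)^' --> RR I 1.
Proof. apply: cvg_prodK => i _; apply: cvg_prodK => j _; exact: cvg_rho. Qed.

Lemma cvg_powz k : (fun z : K => (1 - z^-1) ^+ k) @ (1:K)^' --> ((1 - 1 : K) ^+ k).
Proof.
elim: k => [|k IH].
  under eq_cvg do rewrite expr0; rewrite expr0; exact: cvg_cst.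
under eq_cvg do rewrite exprS; rewrite exprS; apply: cvgM => //.
have := cvg_lin (a:=1); under eq_cvg do rewrite mulr1; by rewrite mulr1.
Qed.

Lemma Tz_near0 I : KI I = 0 -> Tz I z @[z --> (1:K)^'] --> 0.
Proof.
move=> h; apply: cvg_trans (near_eq_cvg _) (cvg_cst (0:K)).
near=> z; rewrite TzE ?h ?mul0r //.
near: z; exact: near1_neq0.
Unshelve. all: by end_near.
Qed.

Lemma Tz_lim_gen I : KI I != 0 ->
  Tz I z @[z --> (1:K)^'] --> KI I * ((1 - 1) ^+ (EZ I - EB I) * RR I 1).
Proof.
move=> KIn; have hle : (EB I <= EZ I)%N by apply: leq_trans (leq_addr _ _) (EB_le KIn).
apply: cvg_trans (near_eq_cvg _) _; last first.
  apply: cvgM; first exact: cvg_cst.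
  apply: cvgM; [exact: cvg_powz | exact: cvg_RR].
near=> z; have z0 : z != 0 by near: z; exact: near1_neq0.
have z1 : z != 1 by near: z; exact: near1_neq1.
rewrite TzE // -[in X in _ = _ * (X / _ * _)](subnK hle) exprD mulfK //.
by rewrite expf_neq0 // subr_eq0 eq_sym invr_eq1.
Unshelve. all: by end_near.
Qed.

Lemma Tz_cvg I : cvg (Tz I z @[z --> (1:K)^']).
Proof.
case: (eqVneq (KI I) 0) => h; apply: cvgP; [exact: Tz_near0 | exact: Tz_lim_gen].
Qed.

Lemma Tz_cvg0 (I : {set 'I_M}) (i0 : 'I_M) : i0 \in I -> (i0 : nat) = M.-1 -> lam i0 = 0 ->
  Tz I z @[z --> (1:K)^'] --> 0.
Proof.
move=> i0I ei0 l0.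
case: (eqVneq (KI I) 0) => h; first exact: Tz_near0.
have := EB_le h.
have -> : has (fun i => memI I i && (mu (i + (N - M))%N == lam i)) (iota 0 M).
  apply/hasP; exists (val i0); first by rewrite mem_iota add0n ltn_ord.
  rewrite memI_ord i0I l0 /=; have := inter (ltn_ord i0); rewrite l0; lia.
move=> hlt; have := Tz_lim_gen h.
by rewrite subrr expr0n (_ : (EZ I - EB I == 0)%N = false) ?mul0r ?mulr0 //; lia.
Qed.

End World.

Lemma nth_mapiota (K : numFieldType) (f : nat -> K) M (i : nat) :
  (i < M)%N -> nth 0 [seq f i | i <- iota 0 M] i = f i.
Proof. by move=> h; rewrite (nth_map 0%N) ?size_iota // nth_iota. Qed.

Lemma VzE (K : numFieldType) (q t u z : K) M N (lam' mu' : seq nat) :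
  Vz u z q t M N lam' mu' = \sum_(I : {set 'I_M}) @Tz _ q t u M N (part lam') (part mu') I z.
Proof.
rewrite /Vz /Ffun; apply: eq_bigr => I _; rewrite /Tz /crossF /PF; congr (_ * _ * _).
  apply: eq_bigr => i _; apply: eq_bigr => j _.
  by rewrite !nth_mapiota.
apply: eq_bigr => i _; apply: eq_bigr => j _.
by rewrite !nth_mapiota.
Qed.

Lemma widen_inj m : injective (widen_ord (leqnSn m)).
Proof. move=> a b e; apply: val_inj; exact: (congr1 val e). Qed.

Definition hI m (I : {set 'I_m}) : {set 'I_m.+1} := [set widen_ord (leqnSn m) i | i in I].
Definition hI' m (I : {set 'I_m.+1}) : {set 'I_m} := [set j | widen_ord (leqnSn m) j \in I].

Lemma hI'K m (I : {set 'I_m.+1}) : ord_max \notin I -> hI (hI' I) = I.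
Proof.
move=> hm; apply/setP => j; rewrite /hI.
case: (ltnP j m) => hj.
  have -> : j = widen_ord (leqnSn m) (Ordinal hj) by apply: val_inj.
  by rewrite mem_imset ?inE //; exact: widen_inj.
have -> : j = ord_max by apply: val_inj => /=; have := ltn_ord j; lia.
rewrite (negbTE hm); apply/negP => /imsetP [k _ /(congr1 val) /= e].
move: e; have := ltn_ord k; lia.
Qed.

Lemma hIK m (I : {set 'I_m}) : hI' (hI I) = I.
Proof. by apply/setP => j; rewrite inE mem_imset //; exact: widen_inj. Qed.

Lemma max_notin_hI m (I : {set 'I_m}) : ord_max \notin hI I.
Proof.
apply/negP => /imsetP [k _ /(congr1 val) /= e].
move: e; have := ltn_ord k; lia.
Qed.

Lemma card_hI m (I : {set 'I_m}) : #|hI I| = #|I|.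
Proof. rewrite card_imset //; exact: widen_inj. Qed.

Section Compare.
Variables (K : numFieldType) (q t u : K) (m' n' : nat) (lam mu : nat -> nat).
Hypothesis q0 : q != 0.
Hypothesis t0 : t != 0.
Hypothesis gen : forall i j : int, (i != 0) || (j != 0) -> q ^ i * t ^ j != 1.

Local Notation xL := (xX q t m'.+1 lam).
Local Notation xR := (xX q t m' lam).
Local Notation yL := (yY q t n'.+1 mu).
Local Notation yR := (yY q t n' mu).
Local Notation cL := (cX q t m'.+1 lam).

Definition Fm (i : nat) (z : K) : K := (t * xL z i - xL z m') / (xL z i - xL z m').
Definition Gm (i : nat) (z : K) : K := (1 - xL z i * yL n') / (1 - t * xL z i * yL n').

Lemma xLR z (i : nat) : (i < m')%N -> xL z i = t^-1 * xR z i.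
Proof.
move=> h; rewrite /xX.
have -> : (m'.+1 - i.+1)%N = (m' - i.+1).+1 by lia.
by rewrite exprS mulrCA invfM.
Qed.

Lemma yLR (j : nat) : (j < n')%N -> yL j = t * yR j.
Proof.
move=> h; rewrite /yY.
have -> : (n'.+1 - j.+1)%N = (n' - j.+1).+1 by lia.
by rewrite exprS mulrCA.
Qed.

Lemma TL_split (I : {set 'I_m'}) z :
  @Tz _ q t u m'.+1 n'.+1 lam mu (hI I) z =
  @Tz _ q t u m' n' lam mu I z * \prod_(i in I) (Fm i z * Gm i z).
Proof.
have ti0 : t^-1 != 0 by rewrite invr_eq0.
rewrite /Tz card_hI /crossF /PF.
have hc : \prod_(i in hI I) \prod_(j in ~: hI I)
      ((t * xX q t m'.+1 lam z i - xX q t m'.+1 lam z j) /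
       (xX q t m'.+1 lam z i - xX q t m'.+1 lam z j)) =
   \prod_(i in I) ((\prod_(j in ~: I) ((t * xR z i - xR z j) / (xR z i - xR z j))) * Fm i z).
  rewrite big_imset /=; last by move=> a b _ _; exact: widen_inj.
  apply: eq_bigr => i iI.
  rewrite big_mkcond /= big_ord_recr /= -big_mkcond /=.
  rewrite inE (negbTE (max_notin_hI I)) /=; congr (_ * _).
  apply: eq_big => [j|j _]; first by rewrite !inE mem_imset //; exact: widen_inj.
  by rewrite /= !xLR // ratio_scale.
have hp : \prod_(i in hI I) \prod_(j < n'.+1)
      ((1 - xX q t m'.+1 lam z i * yY q t n'.+1 mu j) /
       (1 - t * xX q t m'.+1 lam z i * yY q t n'.+1 mu j)) =
   \prod_(i in I) ((\prod_(j < n') ((1 - xR z i * yR j) / (1 - t * xR z i * yR j))) * Gm i z).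
  rewrite big_imset /=; last by move=> a b _ _; exact: widen_inj.
  apply: eq_bigr => i iI.
  rewrite big_ord_recr /=; congr (_ * _).
  apply: eq_bigr => j _.
  rewrite /= xLR // yLR //.
  have e : t^-1 * xR z i * (t * yR j) = xR z i * yR j.
    by rewrite mulrACA [t^-1 * t]mulrC mulfV // mul1r.
  rewrite e; congr (_ / (1 - _)); rewrite -!mulrA; congr (_ * _); rewrite mulrA; exact: e.
rewrite hc hp !big_split /=; ring.
Qed.


Hypothesis MN : (m' <= n')%N.
Hypothesis lam_ni : forall i, (lam i.+1 <= lam i)%N.
Hypothesis mu_ni : forall i, (mu i.+1 <= mu i)%N.
Hypothesis interR : forall i, (i < m')%N -> (mu (i + (n' - m'))%N <= lam i)%N.
Hypothesis lam0 : lam m' = 0%N.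
Hypothesis mu0 : mu n' = 0%N.

Lemma MNL : (m'.+1 <= n'.+1)%N. Proof. by []. Qed.

Lemma interL i : (i < m'.+1)%N -> (mu (i + (n'.+1 - m'.+1))%N <= lam i)%N.
Proof.
rewrite subSS ltnS leq_eqVlt => /orP[/eqP ->|h]; last exact: interR.
by rewrite (_ : (m' + (n' - m'))%N = n') ?mu0 //; lia.
Qed.

Lemma cL_m : cL m' = 1.
Proof. by rewrite /cX lam0 subnn !expr0 mulr1 invr1. Qed.

Lemma yL_n : yL n' = 1.
Proof. by rewrite /yY mu0 subnn !expr0 mulr1. Qed.

Lemma Fm_E i z : z != 0 -> Fm i z = (t * cL i - 1) / (cL i - 1).
Proof.
move=> z0; rewrite /Fm !xXE cL_m -[z^-1 in X in X / _]mulr1 -[z^-1 in X in _ / X]mulr1.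
by rewrite ratio_scale // mulr1 invr_eq0.
Qed.

Lemma Gm_E i z : Gm i z = (1 - z^-1 * cL i) / (1 - z^-1 * (t * cL i)).
Proof. by rewrite /Gm yL_n !mulr1 xXE mulrCA. Qed.

Lemma cL_neq1 (i : 'I_m') : cL i != 1.
Proof.
rewrite /cX invr_eq1; have := gen_eqb q0 t0 gen (lam i) (m'.+1 - i.+1) 0 0.
rewrite !expr0 mulr1 => ->; have := ltn_ord i.
by case: (lam i == 0%N) => //=; case: eqP => //; lia.
Qed.

Lemma tcL1 (i : 'I_m') : (t * cL i == 1) = (lam i == 0%N) && ((i : nat) == m'.-1).
Proof.
rewrite mulrC /cX inv_mul_eq1 ?qt_neq0 //.
have E1 := gen_eqb q0 t0 gen 0 1 (lam i) (m'.+1 - i.+1).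
rewrite expr0 expr1 mul1r in E1; rewrite E1 eq_sym; congr (_ && _).
have := ltn_ord i; move=> hi; apply/eqP/eqP; lia.
Qed.

Lemma E_cvg1 (I : {set 'I_m'}) : (forall i, i \in I -> t * cL i != 1) ->
  (fun z => \prod_(i in I) (Fm i z * Gm i z)) @ (1:K)^' --> (1:K).
Proof.
move=> hI1.
have hc : (fun z => \prod_(i in I) ((t * cL i - 1) / (cL i - 1) *
      ((1 - z^-1 * cL i) / (1 - z^-1 * (t * cL i))))) @ (1:K)^' -->
    \prod_(i in I) ((t * cL i - 1) / (cL i - 1) * ((1 - 1 * cL i) / (1 - 1 * (t * cL i)))).
  apply: cvg_prodK => i iI; apply: cvgM; first exact: cvg_cst.
  apply: cvgM; first exact: cvg_lin.
  apply: cvgV; last exact: cvg_lin.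
  by rewrite mul1r subr_eq0 eq_sym hI1.
have e1 : \prod_(i in I) ((t * cL i - 1) / (cL i - 1) * ((1 - 1 * cL i) / (1 - 1 * (t * cL i)))) = 1.
  rewrite big1 // => i iI; have h1 := hI1 i iI; have h2 := cL_neq1 i.
  rewrite !mul1r; field.
  by rewrite !subr_eq0 h2 eq_sym h1.
rewrite e1 in hc; apply: cvg_trans hc; apply: near_eq_cvg.
near=> z; have z0 : z != 0 by near: z; exact: near1_neq0.
by apply: eq_bigr => i _; rewrite Fm_E // Gm_E.
Unshelve. all: by end_near.
Qed.


Lemma limT (I : {set 'I_m'}) :
  lim (@Tz _ q t u m'.+1 n'.+1 lam mu (hI I) z @[z --> (1:K)^']) =
  lim (@Tz _ q t u m' n' lam mu I z @[z --> (1:K)^']).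
Proof.
have -> : (fun z => @Tz _ q t u m'.+1 n'.+1 lam mu (hI I) z) =
          (fun z => @Tz _ q t u m' n' lam mu I z * \prod_(i in I) (Fm i z * Gm i z)).
  by apply: funext => z; exact: TL_split.
case: (boolP [exists i in I, t * cL i == 1]) => [/existsP [i0 /andP[i0I h]] | hn].
  have := h; rewrite tcL1 => /andP[/eqP l0 /eqP ei].
  rewrite (norm_cvg_lim (l := 0)); last first.
    apply: cvg_trans (near_eq_cvg _) (cvg_cst (0:K)).
    near=> z; have z0 : z != 0 by near: z; exact: near1_neq0.
    rewrite (bigD1 i0) //= Fm_E // (eqP h) subrr !mul0r mulr0 //.
  rewrite (norm_cvg_lim (l := 0)) //.
  exact: (Tz_cvg0 u q0 t0 gen MN lam_ni mu_ni interR i0I ei l0).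
have hI1 : forall i, i \in I -> t * cL i != 1.
  move=> i iI; apply: contra hn => h; apply/existsP; exists i; by rewrite iI h.
apply: norm_cvg_lim; rewrite -[X in _ --> X]mulr1; apply: cvgM.
  exact: (Tz_cvg q0 t0 gen MN lam_ni mu_ni interR).
exact: E_cvg1.
Unshelve. all: by end_near.
Qed.

Lemma V1_cmp :
  lim ((fun z => \sum_(I : {set 'I_m'.+1}) @Tz _ q t u m'.+1 n'.+1 lam mu I z) @ (1:K)^') =
  lim ((fun z => \sum_(I : {set 'I_m'}) @Tz _ q t u m' n' lam mu I z) @ (1:K)^').
Proof.
rewrite lim_sumK; last first.
  by move=> I _; exact: (Tz_cvg q0 t0 gen MNL lam_ni mu_ni interL).
rewrite lim_sumK; last first.
  by move=> I _; exact: (Tz_cvg q0 t0 gen MN lam_ni mu_ni interR).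
rewrite (bigID (fun I : {set 'I_m'.+1} => ord_max \in I)) /= big1 ?add0r; last first.
  move=> I hI; apply: norm_cvg_lim.
  exact: (Tz_cvg0 u q0 t0 gen MNL lam_ni mu_ni interL hI (erefl _) lam0).
rewrite (reindex_onto (@hI m') (@hI' m')) /=; last by move=> I /hI'K.
apply: eq_big => [I|I _]; first by rewrite max_notin_hI hIK eqxx.
exact: limT.
Qed.
End Compare.


Lemma part_rcons s i : part (rcons s 0%N) i = part s i.
Proof. exact: nth_rcons_default. Qed.

Lemma part_size s : part s (size s) = 0%N.
Proof. by rewrite /part nth_default. Qed.

Lemma part_ni s : sorted geq s -> forall i, (part s i.+1 <= part s i)%N.
Proof.
move=> ss i; case: (ltnP i.+1 (size s)) => h.
  have trg : transitive geq by move=> a b c h1 h2; exact: leq_trans h2 h1.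
  have := @sorted_leq_nth _ geq trg (@leqnn) 0%N s ss i i.+1.
  rewrite !inE => /(_ (ltnW h) h (leqnSn i)); exact.
by rewrite /part (nth_default 0%N h).
Qed.

Lemma interlace_part M N l m : interlace M N l m ->
  forall i, (i < M)%N -> (part m (i + (N - M))%N <= part l i)%N.
Proof. by move/allP => H i hi; apply: H; rewrite mem_iota. Qed.

Lemma sumn_part s : sumn s = (\sum_(j < size s) part s j)%N.
Proof.
elim: s => [|x s IH]; first by rewrite big_ord0.
by rewrite /= big_ord_recl /= IH.
Qed.

Lemma nfun_rcons s : nfun (rcons s 0%N) = nfun s.
Proof.
rewrite /nfun size_rcons big_ord_recr /= part_rcons part_size muln0 addn0.
by apply: eq_bigr => i _; rewrite part_rcons.
Qed.

Lemma pconj_rcons s j : pconj (rcons s 0%N) j = pconj s j.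
Proof. by rewrite /pconj -cats1 count_cat /= ?ltn0 ?addn0. Qed.

Lemma cprime_rcons (K : numFieldType) (q t : K) s : cprime q t (rcons s 0%N) = cprime q t s.
Proof.
rewrite /cprime size_rcons big_ord_recr /= part_rcons part_size big_ord0 mulr1.
apply: eq_bigr => i _; rewrite /= part_rcons; apply: eq_bigr => j _.
by rewrite /arm /leg part_rcons pconj_rcons.
Qed.

Lemma qtpoch_rcons (K : numFieldType) (b q t : K) s :
  qtpoch b q t (rcons s 0%N) = qtpoch b q t s.
Proof.
rewrite /qtpoch size_rcons big_ord_recr /= part_rcons part_size /qpoch big_ord0 mulr1.
by apply: eq_bigr => i _; rewrite part_rcons.
Qed.

Section Qpoch.
Variables (K : numFieldType) (q t : K).
Hypothesis q0 : q != 0.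
Hypothesis t0 : t != 0.
Hypothesis gen : forall i j : int, (i != 0) || (j != 0) -> q ^ i * t ^ j != 1.

Lemma qpoch_neq0 (e : int) N : qpoch (q * t ^ e) q N != 0.
Proof.
apply/prodf_neq0 => k _; rewrite subr_eq0 eq_sym.
have := @gen (k.+1)%:Z e isT.
by rewrite (_ : q * t ^ e * q ^+ k = q ^+ k.+1 * t ^ e) // mulrAC -exprS.
Qed.

Lemma qpoch_rev (c : K) N : c != 0 ->
  qpoch (c * q * q ^- N) q N = (- c) ^+ N * \prod_(l < N) (q ^+ l)^-1 * qpoch c^-1 q N.
Proof.
move=> c0; rewrite /qpoch (reindex_inj rev_ord_inj) /=.
have E : forall l : 'I_N, 1 - c * q * q ^- N * q ^+ (N - l.+1) =
    (- c * (q ^+ l)^-1) * (1 - c^-1 * q ^+ l).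
  move=> l; have hl := ltn_ord l.
  have eN : q ^+ N = q ^+ (N - l.+1) * q ^+ l * q.
    by rewrite -exprD -exprSr; congr (_ ^+ _); lia.
  rewrite eN; field.
  by rewrite c0 q0 !expf_neq0.
rewrite (eq_bigr _ (fun l _ => E l)) big_split /= big_split /= prodr_const card_ord.
by rewrite -mulrA.
Qed.

Lemma row_ratio (c : K) N : c != 0 ->
  qpoch (t * c * q * q ^- N) q N / qpoch (c * q * q ^- N) q N =
  t ^+ N * (qpoch (t * c)^-1 q N / qpoch c^-1 q N).
Proof.
move=> c0; rewrite !qpoch_rev // ?mulf_neq0 //.
have Q0 : \prod_(l < N) (q ^+ l)^-1 != 0.
  by apply/prodf_neq0 => l _; rewrite invr_eq0 expf_neq0.
move: (\prod_(l < N) (q ^+ l)^-1) Q0 => Q Q0.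
rewrite !invfM; move: (qpoch c^-1 q N)^-1 => P1.
rewrite -mulrN exprMn.
have X0 : (- c) ^+ N != 0 by rewrite expf_neq0 // oppr_eq0.
move: ((- c) ^+ N) X0 => X X0.
field; by rewrite X0 Q0.
Qed.

End Qpoch.

Lemma V1_rcons (K : numFieldType) (q t u : K) m' n' (lam' mu' : seq nat) :
  q != 0 -> t != 0 -> (forall i j : int, (i != 0) || (j != 0) -> q ^ i * t ^ j != 1) ->
  (m' <= n')%N -> sorted geq lam' -> sorted geq mu' -> size lam' = m' -> size mu' = n' ->
  interlace m' n' lam' mu' ->
  V1 u q t m'.+1 n'.+1 (rcons lam' 0%N) (rcons mu' 0%N) = V1 u q t m' n' lam' mu'.
Proof.
move=> q0 t0 gen MN sl sm szl szm il.
have pl : part (rcons lam' 0%N) = part lam' by apply: funext => i; exact: part_rcons.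
have pm : part (rcons mu' 0%N) = part mu' by apply: funext => i; exact: part_rcons.
rewrite /V1.
have -> : (fun z => Vz u z q t m'.+1 n'.+1 (rcons lam' 0%N) (rcons mu' 0%N)) =
  (fun z => \sum_(I : {set 'I_m'.+1}) @Tz _ q t u m'.+1 n'.+1 (part lam') (part mu') I z).
  by apply: funext => z; rewrite VzE pl pm.
have -> : (fun z => Vz u z q t m' n' lam' mu') =
  (fun z => \sum_(I : {set 'I_m'}) @Tz _ q t u m' n' (part lam') (part mu') I z).
  by apply: funext => z; rewrite VzE.
apply: V1_cmp => //.
- exact: part_ni.
- exact: part_ni.
- exact: interlace_part.
- by rewrite -szl part_size.
- by rewrite -szm part_size.
Qed.

Lemma Vqt_rcons (K : numFieldType) typ (q t : K) m' n' (lam' mu' : seq nat) :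
  q != 0 -> t != 0 -> (forall i j : int, (i != 0) || (j != 0) -> q ^ i * t ^ j != 1) ->
  (m' <= n')%N -> sorted geq lam' -> sorted geq mu' -> size lam' = m' -> size mu' = n' ->
  interlace m' n' lam' mu' ->
  Vqt typ q t m'.+1 n'.+1 (rcons lam' 0%N) (rcons mu' 0%N) = Vqt typ q t m' n' lam' mu'.
Proof.
move=> *; case: typ => /=; first by rewrite V1_rcons.
by rewrite subSS V1_rcons // sumn_rcons addn0.
Qed.

Section OmegaSec.
Variables (K : numFieldType) (q t : K).
Hypothesis q0 : q != 0.
Hypothesis t0 : t != 0.
Hypothesis gen : forall i j : int, (i != 0) || (j != 0) -> q ^ i * t ^ j != 1.

Lemma qpochZ_negN (b : K) N :
  qpochZ b q ((0%N)%:Z - N%:Z) = (qpoch (b * q ^- N) q N)^-1.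
Proof.
case: N => [|N]; first by rewrite subrr /= /qpoch !big_ord0 invr1.
by rewrite sub0r -NegzE.
Qed.

Lemma qpochZ_pos (b : K) N : qpochZ b q (N%:Z - (0%N)%:Z) = qpoch b q N.
Proof. by rewrite subr0. Qed.

Lemma row_id (e : int) N :
  qpochZ (q * t ^ e) q ((0%N)%:Z - N%:Z) / qpochZ (q * t ^ (e + 1)) q ((0%N)%:Z - N%:Z) =
  t ^+ N * (qpoch (t ^ (- e - 1)) q N / qpoch (t ^ (- e)) q N).
Proof.
rewrite !qpochZ_negN invrK mulrC.
have te0 : t ^ e != 0 by rewrite expfz_neq0.
have -> : q * t ^ (e + 1) * q ^- N = t * t ^ e * q * q ^- N.
  by rewrite expfzDr // expr1z; ring.
have -> : q * t ^ e * q ^- N = t ^ e * q * q ^- N by ring.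
rewrite row_ratio //.
have -> : (t * t ^ e)^-1 = t ^ (- e - 1).
  by rewrite invfM invr_expz mulrC -exprN1 -expfzDr.
by rewrite invr_expz.
Qed.


Definition fQ (m n : nat) (lm mu : nat -> nat) (i j : nat) : K :=
  qpochZ (q * t ^ (j%:Z - i%:Z + m%:Z - n%:Z - 1)) q ((lm i)%:Z - (mu j)%:Z) /
  qpochZ (q * t ^ (j%:Z - i%:Z + m%:Z - n%:Z)) q ((lm i)%:Z - (mu j)%:Z).

Lemma D_split m' n' (lm mu : nat -> nat) : lm m' = 0%N -> mu n' = 0%N ->
  \prod_(i < m'.+1) \prod_(j < n'.+1) fQ m'.+1 n'.+1 lm mu i j =
  (\prod_(i < m') \prod_(j < n') fQ m' n' lm mu i j) *
  \prod_(i < m') (qpoch (q * t ^ (m'%:Z - i%:Z - 1)) q (lm i) /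
                  qpoch (q * t ^ (m'%:Z - i%:Z)) q (lm i)) *
  \prod_(j < n') (t ^+ mu j * (qpoch (t ^ (n'%:Z - j%:Z)) q (mu j) /
                               qpoch (t ^ (n'%:Z - j%:Z + 1)) q (mu j))).
Proof.
move=> l0 m0.
have fs : forall i j : nat, fQ m'.+1 n'.+1 lm mu i j = fQ m' n' lm mu i j.
  move=> i j; rewrite /fQ.
  have -> : (j%:Z - i%:Z + m'.+1%:Z - n'.+1%:Z - 1 = j%:Z - i%:Z + m'%:Z - n'%:Z - 1)%R by lia.
  by have -> : (j%:Z - i%:Z + m'.+1%:Z - n'.+1%:Z = j%:Z - i%:Z + m'%:Z - n'%:Z)%R by lia.
have fc : forall i : nat, fQ m'.+1 n'.+1 lm mu i n' =
    qpoch (q * t ^ (m'%:Z - i%:Z - 1)) q (lm i) / qpoch (q * t ^ (m'%:Z - i%:Z)) q (lm i).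
  move=> i; rewrite /fQ m0 !qpochZ_pos.
  have -> : (n'%:Z - i%:Z + m'.+1%:Z - n'.+1%:Z - 1 = m'%:Z - i%:Z - 1)%R by lia.
  by have -> : (n'%:Z - i%:Z + m'.+1%:Z - n'.+1%:Z = m'%:Z - i%:Z)%R by lia.
have fr : forall j : nat, fQ m'.+1 n'.+1 lm mu m' j =
    t ^+ mu j * (qpoch (t ^ (n'%:Z - j%:Z)) q (mu j) / qpoch (t ^ (n'%:Z - j%:Z + 1)) q (mu j)).
  move=> j; rewrite /fQ l0.
  have -> : (j%:Z - m'%:Z + m'.+1%:Z - n'.+1%:Z - 1 = j%:Z - n'%:Z - 1)%R by lia.
  have -> : (j%:Z - m'%:Z + m'.+1%:Z - n'.+1%:Z = (j%:Z - n'%:Z - 1) + 1)%R by lia.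
  rewrite row_id.
  have -> : (- (j%:Z - n'%:Z - 1) - 1 = n'%:Z - j%:Z)%R by lia.
  by have -> : (- (j%:Z - n'%:Z - 1) = n'%:Z - j%:Z + 1)%R by lia.
have f11 : fQ m'.+1 n'.+1 lm mu m' n' = 1.
  by rewrite /fQ l0 m0 subrr /= /qpoch !big_ord0 divr1.
rewrite big_ord_recr /= big_ord_recr /= f11 mulr1.
rewrite (eq_bigr (fun i : 'I_m' => (\prod_(j < n') fQ m' n' lm mu i j) *
   (qpoch (q * t ^ (m'%:Z - i%:Z - 1)) q (lm i) / qpoch (q * t ^ (m'%:Z - i%:Z)) q (lm i)))); last first.
  move=> i _; rewrite big_ord_recr /= fc; congr (_ * _).
  by apply: eq_bigr => j _; rewrite fs.
rewrite big_split /=; congr (_ * _).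
by apply: eq_bigr => j _; rewrite fr.
Qed.

Lemma t_norm (n j : nat) : t ^+ n * t ^- j = t ^ (n%:Z - j%:Z).
Proof. by rewrite exprnP exprnN -expfzDr. Qed.

Lemma qt_norm (a : int) (i : nat) : q * t ^ a * t ^- i = q * t ^ (a - i%:Z).
Proof. by rewrite exprnN -mulrA -expfzDr. Qed.

Lemma Omega_rcons typ m' n' (lam' mu' : seq nat) :
  (m' <= n')%N -> sorted geq lam' -> sorted geq mu' -> size lam' = m' -> size mu' = n' ->
  interlace m' n' lam' mu' ->
  Omega typ q t m'.+1 n'.+1 (rcons lam' 0%N) (rcons mu' 0%N) =
  Omega typ q t m' n' lam' mu' *
    (t ^+ sumn mu' * (qtpoch (t ^+ n') q t mu' / qtpoch (t ^+ n'.+1) q t mu')).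
Proof.
move=> MN sl sm szl szm il.
have pl : part (rcons lam' 0%N) = part lam' by apply: funext => i; exact: part_rcons.
have pm : part (rcons mu' 0%N) = part mu' by apply: funext => i; exact: part_rcons.
rewrite /Omega Vqt_rcons // qtpoch_rcons pl pm.
have hD := D_split (lm := part lam') (mu := part mu')
   (m' := m') (n' := n') (eq_ind _ (fun k => part lam' k = 0%N) (part_size lam') _ szl)
   (eq_ind _ (fun k => part mu' k = 0%N) (part_size mu') _ szm).
rewrite /fQ in hD; rewrite hD.
rewrite /qtpoch szl szm.
have hAC : \prod_(i < m') qpoch (q * t ^ (m'.+1%:Z - 1) * t ^- i) q (part lam' i) *
   \prod_(i < m') (qpoch (q * t ^ (m'%:Z - i%:Z - 1)) q (part lam' i) /
                   qpoch (q * t ^ (m'%:Z - i%:Z)) q (part lam' i)) =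
   \prod_(i < m') qpoch (q * t ^ (m'%:Z - 1) * t ^- i) q (part lam' i).
  rewrite -big_split /=; apply: eq_bigr => i _.
  rewrite !qt_norm.
  have -> : (m'.+1%:Z - 1 - i%:Z = m'%:Z - i%:Z)%R by lia.
  have -> : (m'%:Z - 1 - i%:Z = m'%:Z - i%:Z - 1)%R by lia.
  by rewrite mulrC divfK // qpoch_neq0.
have hR : \prod_(j < n') (t ^+ part mu' j * (qpoch (t ^ (n'%:Z - j%:Z)) q (part mu' j) /
                               qpoch (t ^ (n'%:Z - j%:Z + 1)) q (part mu' j))) =
   t ^+ sumn mu' * (\prod_(i < n') qpoch (t ^+ n' * t ^- i) q (part mu' i) /
                    \prod_(i < n') qpoch (t ^+ n'.+1 * t ^- i) q (part mu' i)).
  rewrite big_split /= prodrXr sumn_part szm prodf_div; congr (_ * (_ / _)).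
    by apply: eq_bigr => j _; rewrite t_norm.
  apply: eq_bigr => j _; rewrite t_norm.
  by have -> : (n'.+1%:Z - j%:Z = n'%:Z - j%:Z + 1)%R by lia.
rewrite hR -hAC; ring.
Qed.
End OmegaSec.

Lemma size_fseq k N (f : {ffun 'I_k -> 'I_N}) : size (fseq f) = k.
Proof. by rewrite /fseq size_map size_enum_ord. Qed.

Lemma part_fseq k N (f : {ffun 'I_k -> 'I_N}) (j : 'I_k) : part (fseq f) j = f j.
Proof.
rewrite /part /fseq (nth_map j) ?size_enum_ord //.
have -> : nth j (enum 'I_k) j = j by apply: val_inj; rewrite /= nth_enum_ord.
by [].
Qed.

Lemma fseq_inj k N (f g : {ffun 'I_k -> 'I_N}) : fseq f = fseq g -> f = g.
Proof.
move=> e; apply/ffunP => j; apply: val_inj.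
by rewrite /= -(part_fseq f) -(part_fseq g) e.
Qed.

Lemma part_gt0_lt s k : (0 < part s k)%N -> (k < size s)%N.
Proof. by move=> h; rewrite ltnNge; apply: contraL h => hs; rewrite /part nth_default. Qed.

Lemma hstrip_le (lam : seq nat) k N (f : {ffun 'I_k -> 'I_N}) : hstrip lam (fseq f) ->
  forall i, (i < size lam)%N -> (part lam i.+1 <= part (fseq f) i <= part lam i)%N.
Proof. by move/allP => H i hi; apply: H; rewrite mem_iota. Qed.

Lemma sumn_le_hstrip (lam : seq nat) N (f : {ffun 'I_(size lam) -> 'I_N}) :
  hstrip lam (fseq f) -> (sumn (fseq f) <= sumn lam)%N.
Proof.
move=> hs; rewrite !sumn_part size_fseq; apply: leq_sum => i _.
by case/andP: (hstrip_le hs (ltn_ord i)).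
Qed.

Lemma leq_sum_eq k (a b : nat -> nat) : (forall i, (i < k)%N -> (a i <= b i)%N) ->
  (\sum_(i < k) a i = \sum_(i < k) b i)%N -> forall i, (i < k)%N -> a i = b i.
Proof.
elim: k => [|k IH] H E i hi //.
move: E; rewrite !big_ord_recr /= => E.
have h1 : (\sum_(i < k) a i <= \sum_(i < k) b i)%N.
  by apply: leq_sum => j _; apply: H; apply: ltn_trans (ltn_ord j) _.
have h2 := H k (ltnSn k).
have E1 : (\sum_(i < k) a i = \sum_(i < k) b i)%N.
  move: E h1 h2; set SA := (\sum_(i < k) a i)%N; set SB := (\sum_(i < k) b i)%N; lia.
case: (ltngtP i k) => [hik|hik|->].
- exact: (IH (fun j hj => H j (ltn_trans hj (ltnSn k))) E1 i hik).
- by move: hi; rewrite ltnS leqNgt hik.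
- move: E E1; set SA := (\sum_(i < k) a i)%N; set SB := (\sum_(i < k) b i)%N; lia.
Qed.

Section MacP.
Variables (K : numFieldType) (q t : K).

Lemma macP_rev0 (xr : seq K) (lam : seq nat) :
  (0 < part lam (size xr))%N -> macP_rev q t xr lam = 0.
Proof.
elim: xr lam => [|x xr IH] lam h /=.
  case: lam h => [|a l] //=; rewrite /part /= => h.
  by rewrite (_ : (a == 0%N) = false) //; apply/negbTE; rewrite -lt0n.
rewrite big1 // => f hs.
rewrite IH ?mulr0 //.
have hl := part_gt0_lt h.
case/andP: (hstrip_le hs (ltnW hl)) => h1 _.
exact: leq_trans h h1.
Qed.

Lemma all0_sumn (lam : seq nat) : all (fun k => k == 0%N) lam -> sumn lam = 0%N.
Proof. by elim: lam => [|a l IH] //= /andP[/eqP -> /IH ->]. Qed.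

Lemma macP_rev_scale (c : K) (xr : seq K) (lam : seq nat) :
  macP_rev q t [seq c * x | x <- xr] lam = c ^+ sumn lam * macP_rev q t xr lam.
Proof.
elim: xr lam => [|x xr IH] lam /=.
  case: ifP => h; last by rewrite mulr0.
  by rewrite all0_sumn // expr0 mulr1.
rewrite big_distrr /=; apply: eq_bigr => f hs.
rewrite IH exprMn; have hle := sumn_le_hstrip hs.
have -> : c ^+ sumn lam = c ^+ (sumn lam - sumn (fseq f)) * c ^+ sumn (fseq f).
  by rewrite -exprD subnK.
ring.
Qed.

Lemma macP_scale (c : K) (xs : seq K) (lam : seq nat) :
  macP q t [seq c * x | x <- xs] lam = c ^+ sumn lam * macP q t xs lam.
Proof. by rewrite /macP -map_rev macP_rev_scale. Qed.

Lemma psi_refl (lam : seq nat) : psi q t lam lam = 1.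
Proof.
rewrite /psi big1 // => i _; rewrite big_pred0 // => j.
by rewrite ltnn.
Qed.

Lemma macP_rcons0 (xs : seq K) (lam : seq nat) : sorted geq lam ->
  macP q t (rcons xs 0) lam = macP q t xs lam.
Proof.
move=> sl; rewrite /macP rev_rcons /=.
have hle : forall i, (i < size lam)%N -> (nth 0%N lam i < (head 0%N lam).+1)%N.
  move=> i hi; rewrite ltnS -nth0.
  have trg : transitive geq by move=> a b c h1 h2; exact: leq_trans h2 h1.
  have := @sorted_leq_nth _ geq trg (@leqnn) 0%N lam sl 0 i.
  rewrite !inE; apply => //; exact: leq_ltn_trans (leq0n i) hi.
pose f0 : {ffun 'I_(size lam) -> 'I_(head 0%N lam).+1} :=
  [ffun i : 'I_(size lam) => Ordinal (hle i (ltn_ord i))].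
have ef0 : fseq f0 = lam.
  apply: (@eq_from_nth _ 0%N); first by rewrite size_fseq.
  move=> i; rewrite size_fseq => hi.
  by rewrite -/(part _ i) (part_fseq f0 (Ordinal hi)) ffunE.
have hs0 : hstrip lam (fseq f0).
  rewrite ef0; apply/allP => i _; rewrite leqnn andbT; exact: part_ni.
rewrite (bigD1 f0) //= big1 ?addr0.
  by rewrite ef0 psi_refl subnn expr0 !mul1r.
move=> f /andP[hs hf].
rewrite (_ : (sumn lam - sumn (fseq f))%N = (sumn lam - sumn (fseq f)).-1.+1).
  by rewrite expr0n /= mulr0 mul0r.
have : (sumn lam - sumn (fseq f) != 0)%N; last by case: (sumn lam - sumn (fseq f))%N.
apply/negP => /eqP hz; move/negP: hf; apply; apply/eqP; apply: fseq_inj; rewrite ef0.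
have hle2 := sumn_le_hstrip hs.
have E : (\sum_(i < size lam) part (fseq f) i = \sum_(i < size lam) part lam i)%N.
  have e1 := sumn_part (fseq f); rewrite size_fseq in e1.
  rewrite -e1 -sumn_part; lia.
apply: (@eq_from_nth _ 0%N); first by rewrite size_fseq.
move=> i; rewrite size_fseq => hi.
apply: (@leq_sum_eq (size lam) (part (fseq f)) (part lam) _ E i hi) => j hj.
by case/andP: (hstrip_le hs hj).
Qed.

End MacP.

Lemma sorted_rcons0 s : sorted geq (rcons s 0%N) = sorted geq s.
Proof. by case: s => [|a s] //=; rewrite rcons_path andbT. Qed.

Lemma interlace_rcons m' n' l u : (m' <= n')%N -> size l = m' -> size u = n' ->
  interlace m'.+1 n'.+1 (rcons l 0%N) (rcons u 0%N) = interlace m' n' l u.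
Proof.
move=> MN sl su; rewrite /interlace subSS.
rewrite (_ : iota 0 m'.+1 = iota 0 m' ++ [:: m']); last by rewrite -addn1 iotaD.
rewrite all_cat /= !part_rcons.
rewrite (_ : part l m' = 0%N); last by rewrite -sl part_size.
rewrite (_ : part u (m' + (n' - m')) = 0%N); last first.
  by rewrite (_ : (m' + (n' - m'))%N = size u) ?part_size //; lia.
rewrite leqnn !andbT.
by apply: eq_all => i; rewrite !part_rcons.
Qed.

Lemma bfun_rcons (K : numFieldType) (q t : K) s i j :
  bfun q t (rcons s 0%N) i j = bfun q t s i j.
Proof. by rewrite /bfun /arm /leg part_rcons pconj_rcons. Qed.

Lemma psi_rcons (K : numFieldType) (q t : K) l s :
  psi q t (rcons l 0%N) (rcons s 0%N) = psi q t l s.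
Proof.
rewrite /psi size_rcons big_ord_recr /= part_rcons part_size big_ord0 mulr1.
apply: eq_bigr => i _ /=; rewrite !part_rcons.
by apply: eq_big => [j|j _]; rewrite ?part_rcons ?pconj_rcons ?bfun_rcons.
Qed.

Lemma hstrip_rcons l s : size s = size l ->
  hstrip (rcons l 0%N) (rcons s 0%N) = hstrip l s.
Proof.
move=> ss; rewrite /hstrip size_rcons.
rewrite (_ : iota 0 (size l).+1 = iota 0 (size l) ++ [:: size l]); last by rewrite -addn1 iotaD.
rewrite all_cat all_seq1 !part_rcons.
rewrite (_ : part s (size l) = 0%N); last by rewrite -ss part_size.
rewrite part_size.
rewrite (_ : part l (size l).+1 = 0%N) ?leqnn ?andbT; last by rewrite /part nth_default // ltnW.
by apply: eq_all => i; rewrite !part_rcons.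
Qed.

Definition ffext k N (f : {ffun 'I_k -> 'I_N.+1}) : {ffun 'I_k.+1 -> 'I_N.+1} :=
  [ffun i : 'I_k.+1 => if @insub _ (fun x => (x < k)%N) _ (val i) is Some j then f j else ord0].
Definition ffres k N (f : {ffun 'I_k.+1 -> 'I_N.+1}) : {ffun 'I_k -> 'I_N.+1} :=
  [ffun j : 'I_k => f (widen_ord (leqnSn k) j)].

Lemma fseq_ffext k N (f : {ffun 'I_k -> 'I_N.+1}) : fseq (ffext f) = rcons (fseq f) 0%N.
Proof.
apply: (@eq_from_nth _ 0%N); first by rewrite size_rcons !size_fseq.
move=> i; rewrite size_fseq => hi.
rewrite -/(part _ i) (part_fseq _ (Ordinal hi)) ffunE /= -/(part _ i) part_rcons.
case: insubP => [j _ ej | hn].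
  by rewrite -ej part_fseq.
by rewrite /part nth_default // size_fseq leqNgt.
Qed.

Lemma ffext_max k N (f : {ffun 'I_k -> 'I_N.+1}) : ffext f ord_max = ord0.
Proof. by rewrite ffunE /=; case: insubP => // j; rewrite ltnn. Qed.

Lemma ffextK k N (f : {ffun 'I_k -> 'I_N.+1}) : ffres (ffext f) = f.
Proof.
apply/ffunP => j; rewrite !ffunE /=.
case: insubP => [j' _ ej | hn]; first by congr (f _); apply: val_inj.
by rewrite ltn_ord in hn.
Qed.

Lemma ffresK k N (f : {ffun 'I_k.+1 -> 'I_N.+1}) : f ord_max = ord0 -> ffext (ffres f) = f.
Proof.
move=> hm; apply/ffunP => i; rewrite !ffunE /=.
case: insubP => [j _ ej | hn].
  by rewrite ffunE; congr (f _); apply: val_inj.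
have -> : i = ord_max by apply: val_inj => /=; have := ltn_ord i; move: hn; lia.
by rewrite hm.
Qed.

Lemma sum_ffun_rcons (K : numFieldType) k N (P : pred (seq nat)) (F : seq nat -> K) :
  (forall s, P s -> (0 < part s k)%N -> F s = 0) ->
  \sum_(f : {ffun 'I_k.+1 -> 'I_N.+1} | P (fseq f)) F (fseq f) =
  \sum_(f : {ffun 'I_k -> 'I_N.+1} | P (rcons (fseq f) 0%N)) F (rcons (fseq f) 0%N).
Proof.
move=> H.
rewrite (bigID (fun f : {ffun 'I_k.+1 -> 'I_N.+1} => f ord_max == ord0)) /=.
rewrite [X in _ + X]big1 ?addr0; last first.
  move=> f /andP[Pf hf]; apply: H => //.
  have := part_fseq f ord_max; rewrite /= => ->.
  by rewrite lt0n; apply: contra hf => /eqP h; apply/eqP/val_inj.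
rewrite (reindex_onto (@ffext k N) (@ffres k N)) /=; last first.
  by move=> f /andP[_ /eqP h]; exact: ffresK.
apply: eq_big => [f|f _]; last by rewrite fseq_ffext.
by rewrite fseq_ffext ffext_max eqxx ffextK eqxx !andbT.
Qed.

Lemma macP_rev_rcons (K : numFieldType) (q t : K) (xr : seq K) (l : seq nat) :
  macP_rev q t xr (rcons l 0%N) = macP_rev q t xr l.
Proof.
elim: xr l => [|x xr IH] l /=.
  by rewrite -cats1 all_cat /= andbT.
have hh : head 0%N (rcons l 0%N) = head 0%N l by case: l.
rewrite hh size_rcons.
have := @sum_ffun_rcons K (size l) (head 0%N l) (hstrip (rcons l 0%N))
  (fun s => psi q t (rcons l 0%N) s * x ^+ (sumn (rcons l 0%N) - sumn s) * macP_rev q t xr s).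
rewrite /= => ->; last first.
  move=> s hs hp; exfalso.
  have hm : size l \in iota 0 (size (rcons l 0%N)) by rewrite mem_iota size_rcons add0n ltnSn.
  case/andP: (allP hs _ hm) => _.
  by rewrite part_rcons part_size leqNgt hp.
apply: eq_big => [f|f _]; first by rewrite hstrip_rcons // size_fseq.
by rewrite psi_rcons !sumn_rcons !addn0 IH.
Qed.

Lemma macP_rcons_lam (K : numFieldType) (q t : K) (xs : seq K) (l : seq nat) :
  macP q t xs (rcons l 0%N) = macP q t xs l.
Proof. exact: macP_rev_rcons. Qed.

Section Final.
Variables (K : numFieldType) (q t : K).
Hypothesis q0 : q != 0.
Hypothesis t0 : t != 0.
Hypothesis gen : forall i j : int, (i != 0) || (j != 0) -> q ^ i * t ^ j != 1.

Lemma term_rcons typ m' n' (a b x y : seq K) (lam' mu' : seq nat) :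
  (m' <= n')%N -> sorted geq lam' -> sorted geq mu' -> size lam' = m' -> size mu' = n' ->
  interlace m' n' lam' mu' ->
  term typ q t m'.+1 n'.+1 a b (rcons x 0) (rcons y 0) (rcons lam' 0%N) (rcons mu' 0%N) =
  term typ q t m' n' (t ^+ n' :: a) (t ^+ n'.+1 :: b) x [seq t * yj | yj <- y] lam' mu'.
Proof.
move=> MN sl sm szl szm il.
rewrite /term !nfun_rcons !cprime_rcons !macP_rcons0 ?sorted_rcons0 //.
rewrite !macP_rcons_lam macP_scale Omega_rcons // !big_cons.
rewrite (eq_bigr _ (fun c _ => qtpoch_rcons c q t mu')).
rewrite [X in _ / X](eq_bigr _ (fun c _ => qtpoch_rcons c q t mu')).
rewrite !invfM; ring.
Qed.

Lemma Psum_rcons typ m' n' (a b x y : seq K) N :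
  (m' <= n')%N -> size x = m' -> size y = n' ->
  Psum typ q t m'.+1 n'.+1 a b (rcons x 0) (rcons y 0) N =
  Psum typ q t m' n' (t ^+ n' :: a) (t ^+ n'.+1 :: b) x [seq t * yj | yj <- y] N.
Proof.
move=> MN sx sy; rewrite /Psum.
have := @sum_ffun_rcons K m' N (sorted geq)
  (fun s => \sum_(g : {ffun 'I_n'.+1 -> 'I_N.+1} | [&& sorted geq (fseq g),
      interlace m'.+1 n'.+1 s (fseq g) & (sumn s + sumn (fseq g) <= N)%N])
     term typ q t m'.+1 n'.+1 a b (rcons x 0) (rcons y 0) s (fseq g)).
rewrite /= => ->; last first.
  move=> s ss hp; apply: big1 => g _.
  rewrite /term macP_rcons0 // /macP macP_rev0 ?size_rev ?sx //.
  by rewrite !(mulr0, mul0r).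
apply: eq_big => [f|f hf]; first by rewrite sorted_rcons0.
rewrite sorted_rcons0 in hf.
have := @sum_ffun_rcons K n' N (fun u => [&& sorted geq u,
      interlace m'.+1 n'.+1 (rcons (fseq f) 0%N) u & (sumn (rcons (fseq f) 0%N) + sumn u <= N)%N])
  (fun u => term typ q t m'.+1 n'.+1 a b (rcons x 0) (rcons y 0) (rcons (fseq f) 0%N) u).
rewrite /= => ->; last first.
  move=> s /and3P[ss _ _] hp.
  rewrite /term (macP_rcons0 _ _ y) // /macP [macP_rev _ _ (rev y) _]macP_rev0 ?size_rev ?sy //.
  by rewrite !(mulr0, mul0r).
apply: eq_big => [g|g hg].
  by rewrite sorted_rcons0 interlace_rcons ?size_fseq // !sumn_rcons !addn0.
case/and3P: hg; rewrite sorted_rcons0 interlace_rcons ?size_fseq // => sg ig _.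
by rewrite term_rcons // size_fseq.
Qed.

Lemma qpoch_inf0 : qpoch_inf (0 : K) q = 1.
Proof.
rewrite /qpoch_inf (_ : qpoch 0 q = fun=> 1); last first.
  by apply: funext => N; rewrite /qpoch big1 // => k _; rewrite mul0r subr0.
apply: norm_cvg_lim; exact: cvg_cst.
Qed.

Lemma prefactor_rcons m' n' (x : seq K) : size x = m' ->
  prefactor q t m'.+1 n'.+1 (rcons x 0) = prefactor q t m' n' x.
Proof.
move=> sx; rewrite /prefactor big_ord_recr /=.
rewrite (_ : nth 0 (rcons x 0) m' = 0); last by rewrite nth_rcons_default nth_default // sx.
rewrite mul0r qpoch_inf0 divr1 mulr1; apply: eq_bigr => i _.
rewrite nth_rcons_default.
by have -> : (m'.+1%:Z - n'.+1%:Z - 1 = m'%:Z - n'%:Z - 1)%R by lia.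
Qed.

End Final.

Theorem lemma5p5 (K : numFieldType) (typ : mtype) (m n r : nat) (q t : K)
  (a b x y : seq K) :
  (1 <= m)%N -> (m <= n)%N ->
  size x = m.-1 -> size y = n.-1 -> size a = r.+1 -> size b = r ->
  q != 0 -> t != 0 -> `|q| < 1 ->
  (forall i j : int, (i != 0) || (j != 0) -> q ^ i * t ^ j != 1) ->
  cvg (Psum typ q t m n a b (rcons x 0) (rcons y 0) @ \oo) ->
  Phi typ q t m n a b (rcons x 0) (rcons y 0) =
  Phi typ q t m.-1 n.-1 (t ^+ n.-1 :: a) (t ^+ n :: b) x [seq t * yj | yj <- y].
Proof.
move=> hm hmn sx sy _ _ q0 t0 _ gen _.
case: m hm hmn sx => [//|m'] _ hmn sx.
case: n hmn sy => [//|n'] hmn sy /=.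
rewrite /Phi prefactor_rcons //.
have -> : Psum typ q t m'.+1 n'.+1 a b (rcons x 0) (rcons y 0) =
          Psum typ q t m' n' (t ^+ n' :: a) (t ^+ n'.+1 :: b) x [seq t * yj | yj <- y].
  by apply: funext => N; apply: Psum_rcons.
by [].
Qed.
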